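(* Let $\beta>0$ and $\mathcal P$ a parameter set. For all $j\in\{0,\dots,r\}$ and all $n\in\mathbb Z$ there exists a constant $0<l^+_{j,n}<\infty$ such that for all $f\in\mathcal H(\beta,\mathcal P)$, $$\sup_{y\in[n\gamma,(n+1)\gamma]}\big|(\ln f)^{(j)}(y)\big|\le l^+_{j,n}.$$
   Context: $\psi(x)=\pi^{-1/2}e^{-x^2}$. For $\beta>0$, $r$ is the largest integer strictly less than $\beta$. A parameter set $\mathcal{P}=\{\gamma,l^+,L,\varepsilon,C,\alpha,\xi,M\}$ consists of a polynomial $L$ and positive constants; $\mathcal H(\beta,\mathcal P)$ is the set of probability densities $f$ on $\mathbb R$ with: $\ln f$ $r$ times differentiable, $|(\ln f)^{(r)}(x)-(\ln f)^{(r)}(y)|\le r!L(x)|y-x|^{\beta-r}$ whenever $|x-y|\le\gamma$, $|(\ln f)^{(j)}(0)|\le l^+$ for $j=0..r$; $\int|(\ln f)^{(j)}|^{(2\beta+\varepsilon)/j}f\le C$ ($j=1..r$), $\int|L|^{2+\varepsilon/\beta}f\le C$; $f\le M\psi$; $f>0$ nondecreasing on $(-\infty,-\alpha)$, nonincreasing on $(\alpha,\infty)$, $f\ge\xi$ on $[-\alpha,\alpha]$. *)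

(* Defs.v *)
From mathcomp Require Import all_boot all_order all_algebra.
From mathcomp Require Import all_classical all_reals all_analysis.
Set Implicit Arguments. Unset Strict Implicit. Unset Printing Implicit Defensive.
Import Order.TTheory GRing.Theory Num.Theory.
Import numFieldNormedType.Exports.
Local Open Scope classical_set_scope.
Local Open Scope ring_scope.

Definition psi {R : realType} (x : R) : R := (Num.sqrt pi)^-1 * expR (- x ^+ 2).

Definition logf {R : realType} (f : R -> R) : R -> R := fun x => ln (f x).

Definition is_density {R : realType} (f : R -> R) : Prop :=
  measurable_fun setT f /\ (forall x, 0 <= f x) /\
  (\int[@lebesgue_measure R]_(x in setT) (f x)%:E = 1)%E.

(* The class H(beta, P) with P = {gamma, lp, L, eps, C, alpha, xi, M};
   r is the largest integer strictly below beta (passed explicitly). *)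
Definition inH {R : realType} (beta : R) (r : nat)
  (gamma lp : R) (L : {poly R}) (eps C alpha xi M : R) (f : R -> R) : Prop :=
  let g := logf f in
  is_density f /\
  (forall k, (k < r)%N -> forall x, derivable (derive1n k g) x 1) /\
  (forall x y, `|x - y| <= gamma ->
     `|derive1n r g x - derive1n r g y|
       <= (r`!)%:R * L.[x] * (`|y - x| `^ (beta - r%:R))) /\
  (forall j, (j <= r)%N -> `|derive1n j g 0| <= lp) /\
  (forall j, (1 <= j <= r)%N ->
     (\int[@lebesgue_measure R]_(x in setT)
        ((`|derive1n j g x| `^ ((2 * beta + eps) / j%:R)) * f x)%:E
      <= C%:E)%E) /\
  (\int[@lebesgue_measure R]_(x in setT)
      ((`|L.[x]| `^ (2 + eps / beta)) * f x)%:E <= C%:E)%E /\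
  (forall x, f x <= M * psi x) /\
  (forall x, x < - alpha -> 0 < f x) /\
  (forall x y, x <= y -> y < - alpha -> f x <= f y) /\
  (forall x, alpha < x -> 0 < f x) /\
  (forall x y, alpha < x -> x <= y -> f y <= f x) /\
  (forall x, - alpha <= x <= alpha -> xi <= f x).

(* Main.v *)
Require Import Defs.
From mathcomp Require Import all_boot all_order all_algebra.
From mathcomp Require Import all_classical all_reals all_analysis.
Import Order.TTheory GRing.Theory Num.Theory.
Import numFieldNormedType.Exports.
Local Open Scope classical_set_scope.
Local Open Scope ring_scope.
From mathcomp Require Import lra zify.
Lemma mvt_bound (R : realType) (h : R -> R) (K l : R) :
  (forall x, derivable h x 1) ->
  (forall c, `|c| <= K -> `|derive1 h c| <= l) ->
  forall y, `|y| <= K -> `|h y - h 0| <= K * l.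
Proof.
move=> hd hb y hy.
have dd : forall x : R, is_derive x 1 h (derive1 h x).
  by move=> x; rewrite derive1E; apply: derivableP.
have cc : forall a b : R, {within `[a, b], continuous h}.
  move=> a b; apply: continuous_subspaceT => x.
  exact/differentiable_continuous/derivable1_diffP.
have l0 : 0 <= l by apply: le_trans (hb 0 _); rewrite ?normr0 // (le_trans _ hy).
have [y0|y0] := leP 0 y.
  have [c cab ->] := MVT_segment y0 (fun x _ => dd x) (cc 0 y).
  move: cab; rewrite in_itv /= => /andP[c0 cy].
  rewrite normrM subr0 mulrC ler_pM // hb //.
  by rewrite (le_trans _ hy) // !ger0_norm // (le_trans c0).
have [c cab E] := MVT_segment (ltW y0) (fun x _ => dd x) (cc y 0).
move: cab; rewrite in_itv /= => /andP[c0 cy].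
rewrite distrC E normrM sub0r normrN mulrC ler_pM // hb //.
by rewrite (le_trans _ hy) // !ler0_norm ?lerN2 // ltW.
Qed.
Lemma poly_bnd {R : realType} (p : {poly R}) (K : R) : 0 <= K ->
  exists B, 0 <= B /\ forall x, `|x| <= K -> `|p.[x]| <= B.
Proof.
move=> K0; elim/poly_ind: p.
  by exists 0; split => // x _; rewrite horner0 normr0.
move=> p c [B [B0 HB]]; exists (B * K + `|c|); split.
  by rewrite addr_ge0 // mulr_ge0.
move=> x hx; rewrite hornerMXaddC (le_trans (ler_normD _ _)) // lerD2r normrM.
by rewrite ler_pM // HB.
Qed.

Lemma step_bnd (R : realType) (L : {poly R}) (c a gamma lp K : R) :
  0 <= c -> 0 <= a -> 0 < gamma -> 0 <= K ->
  exists l, 0 <= l /\ forall h : R -> R, `|h 0| <= lp ->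
    (forall x y, `|x - y| <= gamma ->
       `|h x - h y| <= c * L.[x] * (`|y - x| `^ a)) ->
    forall y, `|y| <= K -> `|h y| <= lp + l.
Proof.
move=> c0 a0 g0 K0.
have [B [B0 HB]] := @poly_bnd _ L K K0.
set N := (Num.truncn (K / gamma)).+1.
have N0 : 0 < N%:R :> R by rewrite ltr0n.
have KN : K <= N%:R * gamma.
  by rewrite -ler_pdivrMr // ltW // truncnS_gt.
set D := c * B * gamma `^ a.
have D0 : 0 <= D by rewrite mulr_ge0 ?powR_ge0 // mulr_ge0.
exists (N%:R * D); split; first by rewrite mulr_ge0.
move=> h h0 hh y hy.
have claim : forall k, (k <= N)%N -> `|h (k%:R * y / N%:R)| <= lp + k%:R * D.
  elim => [_|k IH kN]; first by rewrite !mul0r addr0.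
  have kN' : (k <= N)%N by apply: ltnW.
  set x1 := k.+1%:R * y / N%:R; set x0 := k%:R * y / N%:R.
  have dx : x1 - x0 = y / N%:R by rewrite /x1 /x0 -mulrBl -mulrBl -natrB // subSnn mul1r.
  have hd : `|x1 - x0| <= gamma.
    rewrite dx normrM [`|N%:R^-1|]gtr0_norm ?invr_gt0 //.
    by rewrite ler_pdivrMr // mulrC (le_trans hy).
  have hx1 : `|x1| <= K.
    rewrite /x1 mulrAC normrM (le_trans _ hy) // ger0_norm ?divr_ge0 //.
    by rewrite ler_piMl // ler_pdivrMr // mul1r ler_nat.
  have := hh x1 x0 hd.
  move=> H1.
  have H2 : c * L.[x1] * `|x0 - x1| `^ a <= D.
    have [Lx0|Lx0] := leP L.[x1] 0.
      apply: le_trans D0; rewrite -mulrA mulr_ge0_le0 //.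
      by rewrite mulr_le0_ge0 ?powR_ge0.
    rewrite /D; apply: ler_pM.
    - by rewrite mulr_ge0 // ltW.
    - exact: powR_ge0.
    - by rewrite ler_wpM2l // (le_trans (ler_norm _)) // HB.
    - by apply: (ge0_ler_powR a0); rewrite ?nnegrE ?normr_ge0 ?(ltW g0) // distrC.
  have E : h x1 = (h x1 - h x0) + h x0 by rewrite subrK.

  rewrite E (le_trans (ler_normD _ _)) // -natr1 mulrDl mul1r addrA addrC.
  apply: lerD; last exact: IH.
  exact: (le_trans H1 H2).
have := claim N (leqnn N).
by rewrite mulrAC divff ?gt_eqF // mul1r.
Qed.

Lemma all_bnd (R : realType) (beta : R) (r : nat)
  (gamma lp : R) (L : {poly R}) (eps C alpha xi M : R) :
  r%:R < beta -> 0 < gamma -> 0 < lp ->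
  forall i, (i <= r)%N -> forall K, 0 <= K -> exists l, 0 < l /\
    forall f : R -> R, inH beta r gamma lp L eps C alpha xi M f ->
    forall y : R, `|y| <= K -> `|derive1n (r - i) (logf f) y| <= l.
Proof.
move=> rb g0 lp0; elim => [_ K K0|i IH iS K K0].
  have c0 : 0 <= (r`!)%:R :> R by [].
  have a0 : 0 <= beta - r%:R by rewrite subr_ge0 ltW.
  have [l0 [l00 Hl]] := @step_bnd R L _ _ gamma lp K c0 a0 g0 K0.
  exists (lp + l0); split; first by rewrite ltr_wpDr.
  move=> f [_ [_ [Hh [H0 _]]]] y hy; rewrite subn0.
  exact: (Hl _ (H0 r (leqnn r)) Hh).
have [l' [l'0 Hl']] := IH (ltnW iS) K K0.
exists (lp + K * l'); split; first by rewrite ltr_wpDr // mulr_ge0 // ltW.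
move=> f Hf y hy.
have ej : (r - i = (r - i.+1).+1)%N by lia.
have Hl2 := Hl' f Hf; rewrite ej in Hl2.
case: Hf => [_ [Hd [_ [H0 _]]]].
set h := derive1n (r - i.+1) (logf f).
have hd : forall x, derivable h x 1 by apply: Hd; lia.
have := @mvt_bound R h K l' hd Hl2 y hy.
have := H0 (r - i.+1)%N (leq_subr _ _).
rewrite -/h => h0b hb.
have E : h y = (h y - h 0) + h 0 by rewrite subrK.
rewrite E (le_trans (ler_normD _ _)) // addrC.
exact: lerD.
Qed.

Theorem lemma11 (R : realType) (beta : R) (r : nat)
  (gamma lp : R) (L : {poly R}) (eps C alpha xi M : R) :
  0 < beta -> r%:R < beta -> beta <= r.+1%:R ->
  0 < gamma -> 0 < lp -> 0 < eps -> 0 < C -> 0 < alpha -> 0 < xi -> 0 < M ->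
  forall (j : nat) (n : int), (j <= r)%N ->
  exists l : R, 0 < l /\
    forall f : R -> R, inH beta r gamma lp L eps C alpha xi M f ->
    forall y : R, n%:~R * gamma <= y <= (n + 1)%:~R * gamma ->
    `|derive1n j (logf f) y| <= l.
Proof.
move=> b0 rb br g0 lp0 _ _ _ _ _ j n jr.
set m : R := n%:~R.
have K0 : 0 <= (`|m| + 1) * gamma by rewrite mulr_ge0 // ?addr_ge0 // ltW.
have [l [l0 Hl]] := @all_bnd R beta r gamma lp L eps C alpha xi M rb g0 lp0 _ (leq_subr j r) _ K0.
exists l; split => // f Hf y /andP[y1 y2].
have := Hl f Hf y; rewrite subKn //; apply.
rewrite intrD -/m in y2.
have /andP[hm1 hm2] : - `|m| <= m <= `|m| by rewrite -ler_norml.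
have e1 : - ((`|m| + 1) * gamma) <= m * gamma.
  by rewrite -mulNr ler_wpM2r ?(ltW g0) // opprD lerBlDr (le_trans hm1) // lerDl.
have e2 : (m + 1) * gamma <= (`|m| + 1) * gamma.
  by rewrite ler_wpM2r ?(ltW g0) // lerD2r.
rewrite ler_norml (le_trans e1 y1) /=.
exact: le_trans y2 e2.
Qed.
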